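(* Consider the (1+1) EA maximizing $\mathrm{OneMax}$ on $\{0,1\}^n$, and let $V_t$ be the $\mathrm{OneMax}$ value (number of $1$s) of its current search point after $t$ iterations. Then, as $n\to\infty$, \[ \mathbb{E}[V_t]\ \ge\ \begin{cases}\dfrac n2+\dfrac{t}{2\sqrt e}-O(1), & \text{if } t=O(\sqrt n),\\[2mm] \dfrac n2+\dfrac{t}{2\sqrt e}(1-o(1)), &\text{if } t=o(n).\end{cases} \] Furthermore, for all $t\ge0$, $\mathbb{E}[V_t]\ge n\bigl(1-\exp(-t/(en))/2\bigr)$.
   Context: $\mathrm{OneMax}(x)=\sum_{i=1}^n x_i$ for $x\in\{0,1\}^n$. The (1+1) EA maximizing $f\colon\{0,1\}^n\to\mathbb{R}$: choose $x\in\{0,1\}^n$ uniformly at random; then repeatedly (one iteration) create $y$ from $x$ by flipping each bit independently with probability $1/n$, and replace $x$ by $y$ if $f(y)\ge f(x)$; the algorithm stops once the optimum is reached (the search point then stays at the optimum). Asymptotic notation refers to $n\to\infty$. *)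

(* Defs.v *)
From HB Require Import structures.
From mathcomp Require Import all_boot all_order all_algebra.
From mathcomp Require Import all_classical all_reals all_analysis.
Set Implicit Arguments. Unset Strict Implicit. Unset Printing Implicit Defensive.
Import Order.TTheory GRing.Theory Num.Theory.
Local Open Scope ring_scope.

Definition bits (n : nat) := {ffun 'I_n -> bool}.

Definition onemax (n : nat) (x : bits n) : nat := (\sum_(i < n) x i)%N.

Definition hamming (n : nat) (x y : bits n) : nat := #|[set i | x i != y i]|.

(* probability that standard bit mutation (rate 1/n) turns x into y *)
Definition mutprob (R : realType) (n : nat) (x y : bits n) : R :=
  (n%:R^-1) ^+ (hamming x y) * (1 - n%:R^-1) ^+ (n - hamming x y).

(* one iteration of the (1+1) EA on OneMax, acting on distributions:
   from x, mutate to z; the new point is z if OneMax z >= OneMax x, else x. *)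
Definition ea_step (R : realType) (n : nat) (p : bits n -> R) : bits n -> R :=
  fun y => \sum_(x : bits n) p x *
    \sum_(z : bits n) @mutprob R n x z *
      (if (if (onemax x <= onemax z)%N then z else x) == y then 1 else 0).

Definition ea_dist (R : realType) (n t : nat) : bits n -> R :=
  iter t (@ea_step R n) (fun _ => ((2 ^ n)%N%:R)^-1).

Definition expected_onemax (R : realType) (n t : nat) : R :=
  \sum_(x : bits n) @ea_dist R n t x * (onemax x)%:R.

(* Main.v *)
Require Import Defs.
From HB Require Import structures.
From mathcomp Require Import all_boot all_order all_algebra.
From mathcomp Require Import all_classical all_reals all_analysis.
From mathcomp Require Import lra ring zify.
Import Order.TTheory GRing.Theory Num.Theory.
Local Open Scope classical_set_scope.
Local Open Scope ring_scope.
Section Comb.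
Variable R : realType.
Variable n : nat.
Local Notation q := (1 - (n%:R : R)^-1).

Lemma mut_prod (x z : bits n) : mutprob R x z =
  \prod_i (if x i == z i then q else (n%:R : R)^-1).
Proof.
rewrite (bigID (fun i => x i != z i)) /=.
have E1 : \prod_(i < n | x i != z i) (if x i == z i then q else (n%:R : R)^-1)
   = \prod_(i < n | x i != z i) (n%:R : R)^-1 by apply: eq_bigr => i /negbTE ->.
have E2 : \prod_(i < n | ~~ (x i != z i)) (if x i == z i then q else (n%:R : R)^-1)
   = \prod_(i < n | ~~ (x i != z i)) q by apply: eq_bigr => i; rewrite negbK => ->.
rewrite E1 E2 !prodr_const /mutprob /hamming; congr (_ * _).
  by rewrite cardsE.
congr (_ ^+ _).
have H := cardsCs (~: [set i | x i != z i]); rewrite card_ord finset.setCK in H; rewrite -H.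
by apply: eq_card => i; rewrite !inE.
Qed.

Lemma sum_prod (G : 'I_n -> bool -> R) :
  \sum_(z : bits n) \prod_i G i (z i) = \prod_i (G i true + G i false).
Proof.
rewrite -bigA_distr_bigA /=.
apply: eq_bigr => i _; by rewrite big_bool.
Qed.

Lemma sum_mut (x : bits n) : \sum_z mutprob R x z = 1.
Proof.
under eq_bigr do rewrite mut_prod.
rewrite (sum_prod (fun i b => if x i == b then q else (n%:R:R)^-1)).
apply: big1 => i _; case: (x i) => /=; rewrite addrC ?subrK //.
by rewrite addrC subrK.
Qed.

Lemma mut_ge0 (x z : bits n) : 0 <= mutprob R x z.
Proof.
rewrite mut_prod; apply: prodr_ge0 => i _.
have h : (n%:R : R)^-1 <= 1 by move: (n) => [|k]; rewrite ?invr0 // invf_le1 // ler1n.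
case: ifP => _; rewrite ?subr_ge0 // invr_ge0 //.
Qed.

Lemma sum_ind (T : finType) (a : T) (f : T -> R) :
  \sum_y (if a == y then 1 else 0) * f y = f a.
Proof.
rewrite (bigD1 a) //= eqxx mul1r big1 ?addr0 // => y /negbTE.
by rewrite eq_sym => ->; rewrite mul0r.
Qed.

Definition gain (x z : bits n) : nat := (onemax z - onemax x)%N.
Definition Dg (x : bits n) : R := \sum_z mutprob R x z * (gain x z)%:R.

Lemma step_sum (p : bits n -> R) : \sum_y ea_step p y = \sum_x p x.
Proof.
rewrite /ea_step exchange_big /=; apply: eq_bigr => x _.
rewrite -mulr_sumr; transitivity (p x * \sum_z mutprob R x z); last by rewrite sum_mut mulr1.
congr (_ * _).
rewrite exchange_big /=; apply: eq_bigr => z _.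
rewrite -mulr_sumr -[RHS]mulr1; congr (_ * _).
by rewrite (bigD1 (if (onemax x <= onemax z)%N then z else x)) //= eqxx big1 ?addr0 // => y /negbTE; rewrite eq_sym => ->.
Qed.

Lemma step_exp (p : bits n -> R) :
  \sum_y ea_step p y * (onemax y)%:R = \sum_x p x * ((onemax x)%:R + Dg x).
Proof.
rewrite /ea_step.
under eq_bigr do rewrite mulr_suml.
rewrite exchange_big /=; apply: eq_bigr => x _.
under eq_bigr do rewrite -mulrA mulr_suml.
rewrite -mulr_sumr exchange_big /=; congr (_ * _).
under eq_bigr do (under eq_bigr do rewrite -mulrA; rewrite -mulr_sumr sum_ind).
have H : forall z, ((onemax (if (onemax x <= onemax z)%N then z else x))%:R : R)
   = (onemax x)%:R + (gain x z)%:R.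
  move=> z; rewrite /gain -natrD; case: leqP => h; first by rewrite subnKC.
  by move/ltnW: h; rewrite -subn_eq0 => /eqP ->; rewrite addn0.
under eq_bigr => z _ do rewrite H mulrDr.
by rewrite big_split /= -mulr_suml sum_mut mul1r.
Qed.

Lemma om_card (x : bits n) : onemax x = #|[pred i | x i]|.
Proof.
rewrite /onemax (bigID (fun i => x i)) /= [X in (_ + X)%N]big1 ?addn0.
  by rewrite -sum1_card; apply: eq_bigr => i ->.
by move=> i /negbTE ->.
Qed.

Lemma gain_ge (x z : bits n) :
  (\prod_(j | x j) ((z j : nat)%:R : R)) * \sum_(i | ~~ x i) ((z i : nat)%:R)
  <= (gain x z)%:R.
Proof.
case: (boolP [forall j, x j ==> z j]) => [/forallP H | /forallPn [j]].
  rewrite big1 ?mul1r; last by move=> j xj; move: (H j); rewrite xj /= => ->.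
  rewrite -natr_sum ler_nat /gain.
  have Ez : onemax z = (\sum_(i | x i) z i + \sum_(i | ~~ x i) z i)%N.
    by rewrite /onemax (bigID (fun i => x i)).
  have Ex : onemax x = (\sum_(i | x i) z i)%N.
    rewrite om_card -sum1_card; apply: eq_big => // i; rewrite ?inE /= => xi.
    by move: (H i); rewrite xi /= => ->.
  by rewrite Ez Ex addKn.
rewrite negb_imply => /andP [xj zj].
by rewrite (bigD1 j) //= (negbTE zj) !mul0r.
Qed.

Lemma inner_sum (x : bits n) (i : 'I_n) : ~~ x i ->
  \sum_z mutprob R x z * (\prod_(j | x j) ((z j : nat)%:R : R)) * (z i : nat)%:R
  = (n%:R : R)^-1 * q ^+ onemax x.
Proof.
move=> xi.
pose G := fun j (b : bool) => (if x j == b then q else (n%:R : R)^-1) *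
   (if x j then (b : nat)%:R else 1) * (if j == i then (b : nat)%:R else 1).
have E : forall z : bits n, mutprob R x z * (\prod_(j | x j) ((z j : nat)%:R : R))
   * (z i : nat)%:R = \prod_j G j (z j).
  move=> z; rewrite /G !big_split /= mut_prod -big_mkcond; congr (_ * _).
  by rewrite -big_mkcond /= big_pred1_eq.
under eq_bigr do rewrite E.
rewrite sum_prod.
rewrite (eq_bigr (fun j => if x j then q else if j == i then (n%:R : R)^-1 else 1)); last first.
  move=> j _; rewrite /G; case: (boolP (x j)) => xj /=.
    have -> : (j == i) = false by apply/eqP => ji; move: xi; rewrite -ji xj.
    by rewrite ?xj /= !mulr1 ?mulr0 ?addr0.
  case: (j == i) => /=; rewrite !mulr1 ?mulr0 ?addr0 ?add0r //.
  by rewrite addrC subrK.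
rewrite (bigID (fun j => x j)) /= mulrC; congr (_ * _).
  rewrite (bigD1 i) //= eqxx (negbTE xi) big1 ?mulr1 // => j /andP [/negbTE -> /negbTE ->] //.
rewrite (eq_bigr (fun=> q)); last by move=> j ->.
by rewrite prodr_const om_card.
Qed.

Lemma Dg_ge (x : bits n) :
  (n - onemax x)%:R * ((n%:R : R)^-1 * q ^+ onemax x) <= Dg x.
Proof.
apply: (@le_trans _ _ (\sum_z mutprob R x z * ((\prod_(j | x j) ((z j : nat)%:R : R)) * \sum_(i | ~~ x i) ((z i : nat)%:R)))).
  under eq_bigr do rewrite mulrA mulr_sumr.
  rewrite exchange_big /=.
  rewrite (eq_bigr (fun=> (n%:R : R)^-1 * q ^+ onemax x)); last first.
    by move=> i xi; rewrite -(@inner_sum x i xi).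
  rewrite sumr_const mulr_natl.
  have H := cardC [pred i | x i]; rewrite card_ord in H.
  have -> : (n - onemax x = #|(fun i => ~~ x i)|)%N.
    have E : #|(fun i => ~~ x i)| = #|[predC [pred i | x i]]| by apply: eq_card.
    by rewrite om_card E -{1}H addKn.
  by [].
apply: ler_sum => z _; apply: ler_wpM2l; first exact: mut_ge0.
exact: gain_ge.
Qed.

Lemma n_sub_om (x : bits n) : (n - onemax x)%N = #|[pred i | ~~ x i]|.
Proof.
have H := cardC [pred i | x i]; rewrite card_ord in H.
have E : #|[pred i | ~~ x i]| = #|[predC [pred i | x i]]| by apply: eq_card.
by rewrite om_card E -{1}H addKn.
Qed.

Lemma om_flip (x : bits n) : onemax [ffun i => ~~ x i] = (n - onemax x)%N.
Proof. by rewrite n_sub_om om_card; apply: eq_card => i; rewrite !inE ffunE. Qed.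

Lemma om_le (x : bits n) : (onemax x <= n)%N.
Proof. by rewrite om_card; apply: leq_trans (max_card _) _; rewrite card_ord. Qed.

Lemma card_bits : #|{: bits n}| = (2 ^ n)%N.
Proof. by rewrite card_ffun card_bool card_ord. Qed.

Lemma sum_om : \sum_(x : bits n) ((onemax x)%:R : R) = n%:R * (2 ^ n)%N%:R / 2.
Proof.
have inj : injective (fun x : bits n => [ffun i => ~~ x i]).
  by apply: (can_inj (g := fun x : bits n => [ffun i => ~~ x i])) => x; apply/ffunP => i; rewrite !ffunE negbK.
have H : \sum_(x : bits n) ((onemax x)%:R : R) = \sum_(x : bits n) ((onemax [ffun i => ~~ x i])%:R : R).
  exact: (reindex_inj inj).
rewrite /= in H.
rewrite [X in _ = X](eq_bigr (fun x => n%:R - (onemax x)%:R)) in H; last first.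
  by move=> x _; rewrite om_flip natrB ?om_le.
rewrite sumrB sumr_const card_bits -mulr_natl in H.
apply: (canRL (mulfK _)); first by rewrite pnatr_eq0.
rewrite mulr_natr mulr2n mulrDr mulr1 {1}H subrK mulr1 /=.
reflexivity.
Qed.

Lemma dist_S t : @ea_dist R n t.+1 = ea_step (@ea_dist R n t).
Proof. by rewrite /ea_dist iterS. Qed.

Lemma dist_ge0 t x : 0 <= @ea_dist R n t x.
Proof.
elim: t x => [|t IH] x.
  by rewrite /ea_dist /= invr_ge0 ler0n.
rewrite dist_S /ea_step; apply: sumr_ge0 => y _; apply: mulr_ge0 => //.
apply: sumr_ge0 => z _; apply: mulr_ge0; first exact: mut_ge0.
by case: ifP.
Qed.

Lemma dist_sum t : \sum_x @ea_dist R n t x = 1.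
Proof.
elim: t => [|t IH].
  rewrite /ea_dist /= sumr_const card_bits.
  rewrite -(mulr_natl (((2 ^ n)%N%:R : R)^-1) (2 ^ n)) mulfV //.
by rewrite dist_S step_sum.
Qed.

Lemma E0 : expected_onemax R n 0 = n%:R / 2.
Proof.
rewrite /expected_onemax /ea_dist /= -mulr_sumr sum_om.
have h : ((2 ^ n)%N%:R : R) != 0 by rewrite pnatr_eq0 expn_eq0.
by field; rewrite h /= ?pnatr_eq0.
Qed.

Lemma E_step t : expected_onemax R n t.+1 >=
  expected_onemax R n t + \sum_x @ea_dist R n t x *
     ((n - onemax x)%:R * ((n%:R : R)^-1 * q ^+ onemax x)).
Proof.
rewrite /expected_onemax dist_S step_exp -big_split /=.
apply: ler_sum => x _; rewrite -mulrDr; apply: ler_wpM2l; first exact: dist_ge0.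
by rewrite lerD2l Dg_ge.
Qed.
End Comb.

Section Real.
Variable R : realType.

Lemma powle (x y : R) k : 0 <= x -> x <= y -> x ^+ k <= y ^+ k.
Proof.
move=> x0 xy; elim: k => [|k IH]; first by rewrite !expr0.
rewrite !exprS; apply: ler_pM => //; exact: exprn_ge0.
Qed.

Variable n : nat.
Hypothesis n1 : (1 <= n)%N.
Local Notation N := (n%:R : R).
Local Notation q := (1 - N^-1).

Lemma N_gt0 : 0 < N. Proof. by rewrite ltr0n. Qed.
Lemma invN_le1 : N^-1 <= 1. Proof. by rewrite invf_le1 ?N_gt0 // ler1n. Qed.
Lemma q_ge0 : 0 <= q. Proof. by rewrite subr_ge0 invN_le1. Qed.
Lemma q_le1 : q <= 1. Proof. by rewrite lerBlDr lerDl invr_ge0 ler0n. Qed.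

Lemma bern j : 1 - j%:R / N <= q ^+ j.
Proof.
have N0 := N_gt0; have q0 := q_ge0.
elim: j => [|j IH]; first by rewrite expr0 mul0r subr0.
rewrite exprS.
apply: (@le_trans _ _ (q * (1 - j%:R / N))); last exact: ler_wpM2l.
have -> : q * (1 - j%:R / N) = 1 - j.+1%:R / N + j%:R / N / N.
  by rewrite -natr1; field; rewrite lt0r_neq0.
rewrite lerDl; apply: divr_ge0 => //; apply: divr_ge0 => //; exact: ltW.
Qed.

Lemma bern2 j : q ^+ j * (1 + j%:R / N) <= 1.
Proof.
have N0 := N_gt0; have q0 := q_ge0.
elim: j => [|j IH]; first by rewrite expr0 mul0r addr0 mulr1.
set a := q ^+ j in IH *; set b := 1 + j%:R / N.
have b1 : 1 <= b by rewrite /b lerDl; apply: divr_ge0 => //; exact: ltW.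
have u0 : 0 <= N^-1 by rewrite invr_ge0 ltW.
have a0 : 0 <= a by apply: exprn_ge0.
have -> : q ^+ j.+1 * (1 + j.+1%:R / N) = a * b + a * N^-1 * (1 - b - N^-1).
  rewrite exprSr /a /b -natr1; field; by rewrite lt0r_neq0.
have : 0 <= a * N^-1 * (b - 1 + N^-1).
  apply: mulr_ge0; [exact: mulr_ge0 | ]; rewrite addr_ge0 // subr_ge0 //.
have -> : a * b + a * N^-1 * (1 - b - N^-1) = a * b - a * N^-1 * (b - 1 + N^-1) by ring.
by move=> h; apply: le_trans IH; rewrite lerBlDr lerDl.
Qed.

Lemma phi_lin (k m : nat) : (k <= n)%N ->
  q ^+ m * ((N - m%:R) - (2 * N - m%:R) / N * (k%:R - m%:R)) / N
  <= (n - k)%:R * (N^-1 * q ^+ k).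
Proof.
move=> kn.
have N0 := N_gt0; have q0 := q_ge0.
have qm0 : 0 <= q ^+ m by exact: exprn_ge0.
rewrite natrB // -mulrA.
have -> : (N - k%:R) * (N^-1 * q ^+ k) = q ^+ k * ((N - k%:R) / N) by ring.
have Nn : N != 0 by rewrite lt0r_neq0.
have Kn : k%:R <= N by rewrite ler_nat.
case: (leqP m k) => [mk|km].
  have := bern (k - m); rewrite natrB // => hb.
  have -> : q ^+ k = q ^+ m * q ^+ (k - m) by rewrite -exprD subnKC.
    rewrite -[X in _ <= X]mulrA; apply: ler_wpM2l => //.
  apply: (@le_trans _ _ ((1 - (k%:R - m%:R) / N) * ((N - k%:R) / N))); last first.
    apply: ler_wpM2r hb; apply: divr_ge0; [by rewrite subr_ge0 | exact: ltW].
  rewrite -subr_ge0.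
  have -> : (1 - (k%:R - m%:R) / N) * ((N - k%:R) / N) - (N - m%:R - (2 * N - m%:R) / N * (k%:R - m%:R)) / N
     = (k%:R - m%:R) ^+ 2 / N / N by field.
  apply: divr_ge0; [apply: divr_ge0; [exact: sqr_ge0|exact: ltW]|exact: ltW].
have km' : (k <= m)%N by exact: ltnW.
have := bern2 (m - k); rewrite natrB // => hb.
have E : q ^+ m = q ^+ k * q ^+ (m - k) by rewrite -exprD subnKC.
apply: (@le_trans _ _ (q ^+ m * (1 + (m%:R - k%:R) / N) * ((N - k%:R) / N))).
  rewrite -[X in _ <= X]mulrA; apply: ler_wpM2l => //.
  rewrite -subr_ge0.
  have -> : (1 + (m%:R - k%:R) / N) * ((N - k%:R) / N) - (N - m%:R - (2 * N - m%:R) / N * (k%:R - m%:R)) / N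
     = (k%:R - m%:R) ^+ 2 / N / N by field.
  apply: divr_ge0; [apply: divr_ge0; [exact: sqr_ge0|exact: ltW]|exact: ltW].
apply: ler_wpM2r; first by apply: divr_ge0; [by rewrite subr_ge0 | exact: ltW].
by rewrite E -mulrA -[X in _ <= X]mulr1; apply: ler_wpM2l => //; exact: exprn_ge0.
Qed.
End Real.

Section Real2.
Variable R : realType.

Lemma rec_bound (E : nat -> R) (B M c al : R) :
  0 <= al -> al <= 1 -> 0 <= c -> c <= 2 -> M <= B -> B <= E 0 ->
  (forall t, E t + c - al * (E t - M) <= E t.+1) ->
  forall t, B + t%:R * c - al * t%:R * (B - M) - al * t%:R ^+ 2 <= E t.
Proof.
move=> a0 a1 c0 c2 MB BE HE; elim => [|t IH].
  by rewrite expr0n /= !(mul0r, mulr0, subr0, addr0).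
apply: le_trans (HE t).
have -> : E t + c - al * (E t - M) = (1 - al) * E t + c + al * M by ring.
apply: (@le_trans _ _ ((1 - al) * (B + t%:R * c - al * t%:R * (B - M) - al * t%:R ^+ 2) + c + al * M)); last first.
  by rewrite lerD2r lerD2r; apply: ler_wpM2l; rewrite ?subr_ge0.
rewrite -subr_ge0.
have -> : (1 - al) * (B + t%:R * c - al * t%:R * (B - M) - al * t%:R ^+ 2) + c + al * M -
  (B + t.+1%:R * c - al * t.+1%:R * (B - M) - al * t.+1%:R ^+ 2)
  = al * t%:R * (2 - c) + al ^+ 2 * t%:R * (B - M) + al ^+ 2 * t%:R ^+ 2 + al.
  by rewrite -natr1; ring.
have t0 : 0 <= (t%:R : R) by rewrite ler0n.
rewrite !addr_ge0 //; repeat apply: mulr_ge0 => //; rewrite ?subr_ge0 //; exact: exprn_ge0.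
Qed.

Lemma rec_bound3 (E : nat -> R) (N r : R) :
  0 <= r -> r <= 1 -> N - E 0 <= N / 2 ->
  (forall t, N - E t.+1 <= (N - E t) * (1 - r)) ->
  forall t, N - E t <= N / 2 * (1 - r) ^+ t.
Proof.
move=> r0 r1 E0 HE; elim => [|t IH]; first by rewrite expr0 mulr1.
apply: le_trans (HE t) _; rewrite exprS mulrCA [_ * (1 - r)]mulrC.
by apply: ler_wpM2l; rewrite ?subr_ge0.
Qed.
End Real2.

Section Real3.
Variable R : realType.
Variable n : nat.
Hypothesis n2 : (2 <= n)%N.
Local Notation N := (n%:R : R).
Local Notation q := (1 - N^-1).
Local Notation a := ((N - 1)^-1).

Lemma N1_gt0 : 0 < N - 1.
Proof. by rewrite subr_gt0 ltr1n. Qed.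

Lemma Nne0 : N != 0.
Proof. by rewrite pnatr_eq0 -lt0n (leq_trans _ n2). Qed.

Lemma q_exp : expR (- a) <= q.
Proof.
have h1 := N1_gt0; have h0 := Nne0.
have e1 : q * (1 + a) = 1.
  by field; rewrite h0 /= lt0r_neq0.
have N0 : 0 < N by rewrite lt0r h0 ler0n.
have q0 : 0 <= q by rewrite subr_ge0 invf_le1 // ler1n (leq_trans _ n2).
have : q * (1 + a) <= q * expR a by apply: ler_wpM2l => //; exact: expR_ge1Dx.
rewrite e1 => h.
have := ler_wpM2l (expR_ge0 (- a)) h.
by rewrite mulr1 mulrCA -expRD addNr expR0 mulr1.
Qed.

Lemma a_le1 : a <= 1.
Proof. by rewrite invf_le1 ?N1_gt0 // lerBrDr (ler_nat R 2 n). Qed.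

Lemma c_lower : expR (- (1/2)) / 2 * (1 - a / 2) <=
  q ^+ (n %/ 2) * ((N - (n %/ 2)%:R) / N).
Proof.
have h1 := N1_gt0; have h0 := Nne0.
have N0 : 0 < N by rewrite lt0r h0 ler0n.
have a0 : 0 < a by rewrite invr_gt0.
set M := ((n %/ 2)%:R : R).
have M2 : 2 * M <= N.
  rewrite /M -natrM ler_nat; have := leq_trunc_div n 2; by rewrite mulnC.
have M0 : 0 <= M by rewrite ler0n.
have hq : expR (- (1/2)) * (1 - a / 2) <= q ^+ (n %/ 2).
  apply: (@le_trans _ _ (expR (- a) ^+ (n %/ 2))); last first.
    apply: powle; [exact: expR_ge0 | exact: q_exp].
  rewrite -expRM_natl.
  apply: (@le_trans _ _ (expR (- (1/2) + - (a/2)))).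
    by rewrite expRD; apply: ler_wpM2l; [exact: expR_ge0 | exact: expR_ge1Dx].
  rewrite ler_expR.
  have -> : - (1/2) + - (a/2) = - (N * a / 2) by field; rewrite lt0r_neq0.
  rewrite mulrN lerN2 ler_pdivlMr // mulrC mulrA; apply: ler_wpM2r; first exact: ltW.
  exact: M2.
have hNM : 1/2 <= (N - M) / N.
  by rewrite ler_pdivlMr //; lra.
have -> : expR (- (1/2)) / 2 * (1 - a / 2) = (expR (- (1/2)) * (1 - a / 2)) * (1/2) by ring.
apply: ler_pM; [ | lra | exact: hq | exact: hNM].
apply: mulr_ge0; [exact: expR_ge0|]; rewrite subr_ge0.
by have := a_le1; lra.
Qed.
End Real3.

Section Main.
Variable R : realType.

Lemma eqle (x y : R) : x = y -> x <= y. Proof. by move->. Qed.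

Lemma lin_sum n (p : bits n -> R) (f : bits n -> R) (A B : R) :
  \sum_x p x * (A - B * f x) = A * \sum_x p x - B * \sum_x p x * f x.
Proof.
rewrite mulr_sumr mulr_sumr -sumrB; apply: eq_bigr => x _; ring.
Qed.

Lemma main12 n t : (2 <= n)%N ->
  n%:R / 2 + t%:R * (expR (- (1/2)) / 2) - 4 * t%:R ^+ 2 / n%:R
  <= expected_onemax R n t.
Proof.
move=> n2.
have n1 : (1 <= n)%N by apply: leq_trans n2.
have h0 := @Nne0 R n n2; have h1 := @N1_gt0 R n n2.
have N0 : 0 < (n%:R : R) by rewrite lt0r h0 ler0n.
set N := (n%:R : R) in h0 h1 N0 *.
set q := 1 - N^-1.
set m := (n %/ 2)%N.
set M := (m%:R : R).
set c := q ^+ m * ((N - M) / N).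
set al := q ^+ m * (2 * N - M) / N / N.
have q0 : 0 <= q by apply: (@q_ge0 R n n1).
have q1 : q <= 1 by apply: (@q_le1 R n).
have qm0 : 0 <= q ^+ m by apply: exprn_ge0.
have qm1 : q ^+ m <= 1 by apply: exprn_ile1.
have M2 : 2 * M <= N.
  rewrite /M -natrM ler_nat; have := leq_trunc_div n 2; by rewrite mulnC.
have M2' : N <= 2 * M + 1.
  rewrite /M -natrM natr1 ler_nat /m.
  have := divn_eq n 2; have := ltn_pmod n (isT : (0 < 2)%N); lia.
have M0 : 0 <= M by rewrite ler0n.
have al0 : 0 <= al.
  rewrite /al; apply: divr_ge0; [apply: divr_ge0; [apply: mulr_ge0 => //; lra|exact: ltW]|exact: ltW].
have al2 : al <= 2 / N.
  apply: (@le_trans _ _ ((2 * N - M) / N / N)).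
    rewrite /al -!mulrA -[X in _ <= X]mul1r; apply: ler_wpM2r => //.
    apply: mulr_ge0; [lra|]; apply: mulr_ge0; rewrite invr_ge0 ltW //.
  have -> : (2 * N - M) / N / N = 2 / N - M / N / N by field.
  have : 0 <= M / N / N by apply: divr_ge0; [apply: divr_ge0 => //|]; exact: ltW.
  lra.
have N2 : 2 <= N by rewrite (ler_nat R 2 n).
have al1 : al <= 1.
  apply: le_trans al2 _; rewrite ler_pdivrMr //; lra.
have c0 : 0 <= c.
  apply: mulr_ge0 => //; apply: divr_ge0; [lra|exact: ltW].
have c1 : c <= 2.
  apply: (@le_trans _ _ (1 * 1)); last lra.
  apply: ler_pM => //; first by apply: divr_ge0; [lra|exact: ltW].
  rewrite ler_pdivrMr //; lra.
have H := @rec_bound R (fun t => expected_onemax R n t) (N / 2) M c al al0 al1 c0 c1.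
have MN : M <= N / 2 by lra.
have Hb : N / 2 + t%:R * c - al * t%:R * (N / 2 - M) - al * t%:R ^+ 2 <= expected_onemax R n t.
  apply: (H MN) => [|s]; first by rewrite E0.
  have hs := @E_step R n s. rewrite -/N -/q in hs. apply: le_trans hs.
  rewrite -addrA lerD2l.
  apply: (@le_trans _ _ (\sum_x @ea_dist R n s x * (c + al * M - al * (onemax x)%:R))).
    rewrite lin_sum dist_sum mulr1 /expected_onemax; lra.
  apply: ler_sum => x _; apply: ler_wpM2l; first exact: dist_ge0.
  apply: (le_trans _ (@phi_lin R n n1 _ m (@om_le n x))).
  rewrite /c /al /M; apply: eqle; field; exact: h0.

apply: le_trans Hb.
set T := (t%:R : R).
have T0 : 0 <= T by rewrite ler0n.
have TT : T <= T ^+ 2.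
  by rewrite /T -natrX ler_nat expnS expn1; case: (t) => // k; rewrite leq_pmulr.
have hc := @c_lower R n n2.
rewrite -/N -/q -/m -/M in hc.
have e0 : 0 <= expR (- (1/2)) :> R by apply: expR_ge0.
have e1 : expR (- (1/2)) <= 1 :> R by rewrite expR_le1; lra.
set a := (N - 1)^-1 in hc.
have a2 : a <= 2 / N.
  rewrite -subr_ge0.
  have -> : 2 / N - a = (N - 2) / N / (N - 1).
    by rewrite /a; field; rewrite h0 /= lt0r_neq0.
  apply: divr_ge0; [apply: divr_ge0; [lra|exact: ltW]|exact: ltW].
have a0 : 0 <= a by rewrite invr_ge0 ltW.
have s1 : T * (expR (- (1/2)) / 2) - T / N <= T * c.
  apply: (@le_trans _ _ (T * (expR (- (1/2)) / 2 * (1 - a / 2)))); last exact: ler_wpM2l.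
  have -> : T * (expR (- (1/2)) / 2 * (1 - a / 2)) = T * (expR (- (1/2)) / 2) - T * (expR (- (1/2)) / 2 * (a / 2)) by ring.
  rewrite lerD2l lerN2 -[X in X <= _]mulr1 -mulrA; apply: ler_wpM2l => //.
  rewrite mulr1.
  apply: (@le_trans _ _ (1 / 2 * (2 / N / 2))).
    apply: ler_pM; [apply: divr_ge0 => //|apply: divr_ge0 => //|lra|].
    by apply: ler_wpM2r => //.
  rewrite -subr_ge0; have -> : N^-1 - 1 / 2 * (2 / N / 2) = N^-1 / 2 by field.
  apply: divr_ge0; [rewrite invr_ge0; exact: ltW | lra].
have s2 : al * T * (N / 2 - M) <= T / N.
  apply: (@le_trans _ _ (2 / N * T * (1 / 2))).
    apply: ler_pM; [apply: mulr_ge0 => // | lra | | lra].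
    by apply: ler_wpM2r.
  by apply: eqle; field.
have s3 : al * T ^+ 2 <= 2 * T ^+ 2 / N.
  have -> : 2 * T ^+ 2 / N = 2 / N * T ^+ 2 by ring.
  by apply: ler_wpM2r => //; exact: exprn_ge0.
have s4 : T / N <= T ^+ 2 / N by apply: ler_wpM2r => //; rewrite invr_ge0 ltW.
have e4 : 4 * T ^+ 2 / N = 2 * T ^+ 2 / N + T ^+ 2 / N + T ^+ 2 / N by field.
rewrite e4.
lra.
Qed.
End Main.

Section Main3.
Variable R : realType.

Lemma qpow_e n : (1 <= n)%N -> expR (- (1 : R)) <= (1 - (n%:R : R)^-1) ^+ n.-1.
Proof.
move=> n1; case: (ltngtP n 1) => [|n2|->]; first by rewrite ltnNge n1.
  have h1 := @N1_gt0 R n n2.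
  apply: (@le_trans _ _ (expR (- (n%:R - 1)^-1) ^+ n.-1)); last first.
    apply: powle; [exact: expR_ge0 | exact: q_exp].
  rewrite -expRM_natl; apply/eqle; congr expR.
  rewrite -subn1 natrB ?n1 // mulrN mulfV //; exact: lt0r_neq0.
by rewrite /= expr0 expR_le1 lerN10.
Qed.

Lemma phi3 n k : (1 <= n)%N -> (k <= n)%N ->
  ((n%:R : R) - k%:R) / (expR 1 * n%:R) <= (n - k)%:R * ((n%:R)^-1 * (1 - (n%:R : R)^-1) ^+ k).
Proof.
move=> n1 kn.
have N0 : 0 < (n%:R : R) by rewrite ltr0n.
case: (ltngtP k n) => [kn'|nk|->]; last by rewrite subrr subnn !mul0r.
  2: by move: (leq_trans nk kn); rewrite ltnn.
rewrite natrB //.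
have K0 : 0 <= (n%:R : R) - k%:R by rewrite subr_ge0 ler_nat.
have -> : ((n%:R : R) - k%:R) / (expR 1 * n%:R) = ((n%:R : R) - k%:R) * ((n%:R)^-1 * (expR 1)^-1).
  by rewrite invfM mulrC [X in _ = X]mulrC [(expR 1)^-1 * _]mulrC.
apply: ler_wpM2l => //.
apply: ler_wpM2l; first by rewrite invr_ge0 ltW.
rewrite -expRN; apply: (@le_trans _ _ ((1 - (n%:R : R)^-1) ^+ n.-1)); first exact: (@qpow_e n n1).
have -> : n.-1 = (k + (n.-1 - k))%N by rewrite subnKC // -ltnS prednK.
rewrite exprD -[X in _ <= X]mulr1; apply: ler_wpM2l; first exact: exprn_ge0 (@q_ge0 R n n1).
exact: exprn_ile1 (@q_ge0 R n n1) (@q_le1 R n).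
Qed.

Lemma main3 n t : (0 < n)%N ->
  n%:R * (1 - expR (- (t%:R / (expR 1 * n%:R))) / 2) <= expected_onemax R n t.
Proof.
move=> n1.
have N0 : 0 < (n%:R : R) by rewrite ltr0n.
set N := (n%:R : R) in N0 *.
have e1 : 1 <= expR 1 :> R by rewrite -expR0 ler_expR.
have eN1 : 1 <= expR 1 * N.
  apply: (@le_trans _ _ (1 * 1)); first by rewrite mulr1.
  by apply: ler_pM; [lra|lra|exact: e1|rewrite /N ler1n].
set r := (expR 1 * N)^-1.
have r0 : 0 <= r by rewrite invr_ge0; apply: le_trans eN1.
have r1 : r <= 1 by rewrite invf_le1 // (lt_le_trans ltr01 eN1).
have H := @rec_bound3 R (fun t => expected_onemax R n t) N r r0 r1.
have Hb : N - expected_onemax R n t <= N / 2 * (1 - r) ^+ t.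
  apply: H => [|s]; first by rewrite E0 /N; lra.
  have hs := @E_step R n s.
  have : (N - expected_onemax R n s) * r <= \sum_x @ea_dist R n s x *
       ((n - onemax x)%:R * ((n%:R)^-1 * (1 - (n%:R : R)^-1) ^+ onemax x)).
    apply: (@le_trans _ _ (\sum_x @ea_dist R n s x * (N * r - r * (onemax x)%:R))).
      by rewrite lin_sum dist_sum /expected_onemax; apply: eqle; ring.
    apply: ler_sum => x _; apply: ler_wpM2l; first exact: dist_ge0.
    apply: (le_trans _ (@phi3 n _ n1 (@om_le n x))); apply: eqle; rewrite /r /N; ring.
  move: hs; rewrite -/N; lra.
rewrite -/N.
have : N / 2 * (1 - r) ^+ t <= N / 2 * expR (- (t%:R / (expR 1 * N))).
  apply: ler_wpM2l; first lra.
  have -> : - (t%:R / (expR 1 * N)) = t%:R * - r by rewrite mulrN.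
  rewrite expRM_natl; apply: powle; first by rewrite subr_ge0.
  by have := expR_ge1Dx (- r); lra.
lra.
Qed.
End Main3.

Lemma inv_sqrt_e (R : realType) : (2 * Num.sqrt (expR 1 : R))^-1 = expR (- (1/2)) / 2.
Proof.
have E : expR 1 = expR (1/2 : R) ^+ 2.
  by rewrite -expRM_natl; congr expR; field.
rewrite E sqrtr_sqr ger0_norm ?expR_ge0 // expRN invfM mulrC.
reflexivity.
Qed.

Theorem theorem7 (R : realType) :
  (* t = O(sqrt n)  ==>  E[V_t] >= n/2 + t/(2 sqrt e) - O(1) *)
  (forall t : nat -> nat,
     (exists C : R, \forall n \near \oo, (t n)%:R <= C * Num.sqrt (n%:R : R)) ->
     exists K : R, \forall n \near \oo,
       (n%:R / 2 + (t n)%:R / (2 * Num.sqrt (expR 1)) - K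
          <= expected_onemax R n (t n))) /\
  (* t = o(n)  ==>  E[V_t] >= n/2 + t/(2 sqrt e) (1 - o(1)) *)
  (forall t : nat -> nat,
     (fun n => (t n)%:R / (n%:R : R)) @ \oo --> 0 ->
     exists eps : nat -> R, eps @ \oo --> 0 /\
       \forall n \near \oo,
         (n%:R / 2 + (t n)%:R / (2 * Num.sqrt (expR 1)) * (1 - eps n)
            <= expected_onemax R n (t n))) /\
  (* for all t >= 0: E[V_t] >= n (1 - exp(-t/(e n))/2) *)
  (forall n t : nat, (0 < n)%N ->
     (n%:R * (1 - expR (- (t%:R / (expR 1 * n%:R))) / 2)
        <= expected_onemax R n t)).
Proof.
have hs := inv_sqrt_e R.
have h0 : 0 < expR (- (1/2)) / 2 :> R by apply: divr_gt0 => //; exact: expR_gt0.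
split; last split; last first.
- by move=> n t n1; apply: main3.
- move=> t Ht0.
  set h := expR (- (1/2)) / 2 in hs h0 *.
  exists (fun n => 4 / h * ((t n)%:R / n%:R)); split.
    have H := cvgMl_tmp (a := 4 / h) Ht0; rewrite mulr0 in H; exact: H.
  near=> n.
  have n2 : (2 <= n)%N by near: n; exact: nbhs_infty_ge.
  have N0 : 0 < (n%:R : R) by rewrite ltr0n (leq_trans _ n2).
  apply: (le_trans _ (@main12 R n (t n) n2)).
  rewrite /(_ / _) hs; apply: eqle; rewrite -/h; field.
  by rewrite lt0r_neq0 //= lt0r_neq0.
- move=> t [C HC].
  exists (4 * C ^+ 2).
  near=> n.
  have n2 : (2 <= n)%N by near: n; exact: nbhs_infty_ge.
  have Ht : (t n)%:R <= C * Num.sqrt (n%:R : R) by near: n; exact: HC.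
  have N0 : 0 < (n%:R : R) by rewrite ltr0n (leq_trans _ n2).
  apply: (le_trans _ (@main12 R n (t n) n2)).
  rewrite /(_ / _) hs lerD2l lerN2.
  have T0 : 0 <= ((t n)%:R : R) by rewrite ler0n.
  have hsq : (t n)%:R ^+ 2 <= C ^+ 2 * n%:R :> R.
    have -> : C ^+ 2 * n%:R = (C * Num.sqrt (n%:R : R)) ^+ 2.
      by rewrite exprMn sqr_sqrtr // ler0n.
    by apply: ler_pM.
  rewrite -mulrA; apply: ler_wpM2l => //.
  by rewrite ler_pdivrMr.
Unshelve. all: by end_near.
Qed.
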